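(* $A_4(11,8)\le 60$.
   Context: For an integer $q\ge2$ let $[q]=\{0,1,\dots,q-1\}$. The Hamming distance between $u,v\in[q]^n$ is the number of coordinates in which they differ; $A_q(n,d)$ is the maximum cardinality of a code $C\subseteq[q]^n$ in which any two distinct codewords have Hamming distance at least $d$. *)

(* Defs.v *)
From mathcomp Require Import all_boot.
Set Implicit Arguments. Unset Strict Implicit. Unset Printing Implicit Defensive.

Definition word (q n : nat) := {ffun 'I_n -> 'I_q}.

Definition hamming (q n : nat) (u v : word q n) : nat := #|[set i | u i != v i]|.

Definition min_dist_ge (q n d : nat) (C : {set word q n}) : bool :=
  [forall u in C, forall v in C, (u != v) ==> (d <= hamming u v)].

Definition A (q n d : nat) : nat :=
  \max_(C : {set word q n} | min_dist_ge d C) #|C|.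

(* Main.v *)
Require Import Defs.
From mathcomp Require Import all_boot.
From mathcomp Require Import all_boot zify.

Notation W := (word 4 11).
Definition agr (x y : W) : nat := \sum_(i < 11) (x i == y i).
Definition cls (S : {set W}) (j : 'I_11) (b : 'I_4) : {set W} := [set y in S | y j == b].
Definition Q (S : {set W}) j := \sum_(b < 4) #|cls S j b| * #|cls S j b|.

Lemma sum4 (f : 'I_4 -> nat) : \sum_(b < 4) f b = f (inord 0) + f (inord 1) + f (inord 2) + f (inord 3).
Proof. rewrite !big_ord_recl big_ord0 addn0 !addnA.
by congr (_ + _ + _ + _); apply: congr1; apply: val_inj; rewrite /= inordK. Qed.

Lemma ord4_cases (b : 'I_4) : b = inord 0 \/ b = inord 1 \/ b = inord 2 \/ b = inord 3.
Proof.
case: b => [[|[|[|[|k]]]] h].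
- by left; apply: val_inj; rewrite /= inordK.
- by right; left; apply: val_inj; rewrite /= inordK.
- by right; right; left; apply: val_inj; rewrite /= inordK.
- by right; right; right; apply: val_inj; rewrite /= inordK.
- by [].
Qed.

Lemma card_cls (S : {set W}) j b : #|cls S j b| = \sum_(y in S) (y j == b).
Proof.
rewrite -sum1_card (big_mkcond (fun y => y \in cls S j b)) /= (big_mkcond (fun y => y \in S)).
by apply: eq_bigr => y _; rewrite /cls inE; case: (y \in S); case: (y j == b).
Qed.

Lemma sum_group (S : {set W}) (j : 'I_11) (g : 'I_4 -> nat) :
  \sum_(x in S) g (x j) = \sum_(b < 4) #|cls S j b| * g b.
Proof.
apply/esym; rewrite (eq_bigr (fun b => \sum_(x in S) (x j == b) * g b)); last first.
  by move=> b _; rewrite card_cls big_distrl.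
rewrite exchange_big /=; apply: eq_bigr => x _.
rewrite (bigD1 (x j)) //= eqxx mul1n big1 ?addn0 // => b hb.
by rewrite eq_sym (negbTE hb).
Qed.

Lemma sum_agr (T : {set W}) (x : W) : \sum_(y in T) agr x y = \sum_(j < 11) #|cls T j (x j)|.
Proof.
rewrite /agr exchange_big /=; apply: eq_bigr => j _.
by rewrite card_cls; apply: eq_bigr => y _; rewrite eq_sym.
Qed.

Lemma sum_agr2 (U : {set W}) : \sum_(x in U) \sum_(y in U) agr x y = \sum_(j < 11) Q U j.
Proof.
under eq_bigr => x _ do rewrite sum_agr.
rewrite exchange_big /=; apply: eq_bigr => j _.
by rewrite (sum_group U j (fun b => #|cls U j b|)).
Qed.

Lemma sum_cls (S : {set W}) j : \sum_(b < 4) #|cls S j b| = #|S|.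
Proof.
have h := sum_group S j (fun _ => 1); rewrite /= in h.
by rewrite -sum1_card h; apply: eq_bigr => b _; rewrite muln1.
Qed.

Lemma agr_self (x : W) : agr x x = 11.
Proof. by rewrite /agr (eq_bigr (fun _ => 1)) ?sum1_card ?card_ord // => i _; rewrite eqxx. Qed.

Lemma agr_sym (x y : W) : agr x y = agr y x.
Proof. by apply: eq_bigr => i _; rewrite eq_sym. Qed.

Lemma agr_ham (x y : W) : agr x y + hamming x y = 11.
Proof.
rewrite /hamming -sum1_card big_mkcond /= /agr -big_split /=.
rewrite (eq_bigr (fun _ => 1)) ?sum1_card ?card_ord // => i _.
by rewrite inE; case: (x i == y i).
Qed.
Lemma sq7 (u : nat) : 7*u <= u*u + 12.
Proof. case: (leqP u 3) => h. have : u = 0 \/ u = 1 \/ u = 2 \/ u = 3 by lia. case=>[->|[->|[->|->]]] //. nia. Qed.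
Lemma sq7_eq (u : nat) : u*u + 12 = 7*u -> u = 3 \/ u = 4.
Proof. case: (leqP u 3) => h. have : u = 0 \/ u = 1 \/ u = 2 \/ u = 3 by lia. case=>[->|[->|[->|->]]]; lia.
case: (leqP u 4) => h2. lia. nia. Qed.
Lemma amgm2 (a b : nat) : 2*(a*b) <= a*a + b*b.
Proof. case: (leqP a b) => h; [have [k ->] : exists k, b = a + k by exists (b-a); lia
 | have [k ->] : exists k, a = b + k by exists (a-b); lia]; nia. Qed.
Lemma cs4 (a b c d : nat) : (a+b+c+d)*(a+b+c+d) <= 4*(a*a+b*b+c*c+d*d).
Proof.
have := amgm2 a b; have := amgm2 a c; have := amgm2 a d;
have := amgm2 b c; have := amgm2 b d; have := amgm2 c d. nia.
Qed.

Lemma agr_le3 (C : {set W}) (x y : W) : min_dist_ge 8 C -> x \in C -> y \in C -> x != y -> agr x y <= 3.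
Proof.
move=> /forallP hC xC yC nxy.
have := hC x; rewrite xC /= => /forallP /(_ y); rewrite yC nxy /= => h.
have := agr_ham x y; lia.
Qed.

Definition sl (U : {set W}) := \sum_(x in U) \sum_(y in U | y != x) (3 - agr x y).

Lemma sum_neq_const (x : W) (U : {set W}) c : x \in U ->
  \sum_(y in U | y != x) c = (#|U| - 1) * c.
Proof.
move=> xU; rewrite sum_nat_const; congr (_ * _).
rewrite (cardD1 x U) xU add1n subn1 /=; apply: eq_card => y; rewrite !inE andbC //.
Qed.

Lemma row_eq (C U : {set W}) x : min_dist_ge 8 C -> U \subset C -> x \in U ->
  \sum_(y in U) agr x y + \sum_(y in U | y != x) (3 - agr x y) = 11 + 3 * (#|U| - 1).
Proof.
move=> hC sUC xU; rewrite (bigD1 x) //= agr_self -addnA; congr (_ + _).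
rewrite -big_split /= mulnC -(sum_neq_const x U 3 xU); apply: eq_bigr => y /andP [yU nyx].
have := agr_le3 C x y hC (subsetP sUC x xU) (subsetP sUC y yU); rewrite eq_sym nyx => /(_ isT).
lia.
Qed.

Lemma tot_eq (C U : {set W}) : min_dist_ge 8 C -> U \subset C ->
  \sum_(x in U) \sum_(y in U) agr x y + sl U = #|U| * (11 + 3 * (#|U| - 1)).
Proof.
move=> hC sUC; rewrite /sl -big_split /= -sum_nat_const; apply: eq_bigr => x xU.
exact: row_eq hC sUC xU.
Qed.

Lemma card_neq (i : 'I_11) : #|[pred j : 'I_11 | j != i]| = 10.
Proof. by have := cardC1 i; rewrite card_ord. Qed.

Lemma sum_neq (i : 'I_11) (F : 'I_11 -> nat) c : (forall j, j != i -> c <= F j) ->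
  \sum_(j | j != i) F j = \sum_(j | j != i) (F j - c) + 10 * c.
Proof.
move=> h; have -> : 10 * c = \sum_(j | j != i) c by rewrite sum_nat_const card_neq.
rewrite -big_split /=.
by apply: eq_bigr => j /h hj; rewrite subnK.
Qed.

Lemma term_le (i j : 'I_11) (G : 'I_11 -> nat) : j != i -> G j <= \sum_(k | k != i) G k.
Proof. by move=> h; rewrite (bigD1 j) //= leq_addr. Qed.

Lemma sumQ_split (U : {set W}) i : \sum_(j < 11) Q U j = Q U i + \sum_(j | j != i) Q U j.
Proof. by rewrite (bigD1 i). Qed.

Lemma Q_lb7 (U : {set W}) j : 7 * #|U| <= Q U j + 48.
Proof.
rewrite /Q sum4 -(sum_cls U j) sum4.
have := sq7 #|cls U j (inord 0)|; have := sq7 #|cls U j (inord 1)|;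
have := sq7 #|cls U j (inord 2)|; have := sq7 #|cls U j (inord 3)|. lia.
Qed.

Lemma Q_lb4 (U : {set W}) j : #|U| * #|U| <= 4 * Q U j.
Proof. rewrite /Q sum4 -(sum_cls U j) sum4; exact: cs4. Qed.

Lemma cls_self (C : {set W}) i a : cls (cls C i a) i a = cls C i a.
Proof. by apply/setP => y; rewrite !inE; case: (y \in C); case: (y i == a). Qed.

Lemma cls_other (C : {set W}) i a b : b != a -> cls (cls C i a) i b = set0.
Proof.
move=> hb; apply/setP => y; rewrite !inE; case: (y \in C) => //=.
by case: (y i =P a) => [->|] //=; rewrite ?andbF // eq_sym (negbTE hb).
Qed.

Lemma Q_self (C : {set W}) i a : Q (cls C i a) i = #|cls C i a| * #|cls C i a|.
Proof.
rewrite /Q (bigD1 a) //= cls_self big1 ?addn0 // => b hb.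
by rewrite cls_other // cards0.
Qed.

Lemma cls_sub (C : {set W}) i a : cls C i a \subset C.
Proof. by apply/subsetP => y; rewrite inE => /andP []. Qed.

Lemma sum_neq_lb (i : 'I_11) (F : 'I_11 -> nat) c : (forall j, j != i -> c <= F j) ->
  10 * c <= \sum_(j | j != i) F j.
Proof.
move=> h; have -> : 10 * c = \sum_(j | j != i) c by rewrite sum_nat_const card_neq.
exact: leq_sum.
Qed.

Lemma class_le16 (C : {set W}) i a : min_dist_ge 8 C -> #|cls C i a| <= 16.
Proof.
move=> hC; have T := tot_eq C (cls C i a) hC (cls_sub C i a).
rewrite sum_agr2 (sumQ_split _ i) Q_self in T.
set m := #|cls C i a| in T *.
have H : 10 * (m * m) <= 4 * \sum_(j | j != i) Q (cls C i a) j.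
  rewrite big_distrr /=; apply: sum_neq_lb => j _; exact: Q_lb4.
case: m T H => [|m] T H //. nia.
Qed.

Lemma sl_ge (U : {set W}) x y : x \in U -> y \in U -> y != x -> 3 - agr x y <= sl U.
Proof.
move=> xU yU nyx; rewrite /sl (bigD1 x) //=; apply: leq_trans (leq_addr _ _).
by rewrite (bigD1 y) /= ?yU ?nyx //; apply: leq_addr.
Qed.

Lemma tight (C : {set W}) i a x y : min_dist_ge 8 C -> 15 <= #|cls C i a| ->
  x \in cls C i a -> y \in cls C i a -> x != y -> agr x y = 3.
Proof.
move=> hC h15 xU yU nxy.
have le3 := agr_le3 C x y hC (subsetP (cls_sub C i a) x xU) (subsetP (cls_sub C i a) y yU) nxy.
have hsl := sl_ge _ _ _ xU yU (ltac:(by rewrite eq_sym)).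
have T := tot_eq C (cls C i a) hC (cls_sub C i a).
rewrite sum_agr2 (sumQ_split _ i) Q_self in T.
have h16 := class_le16 C i a hC.
set m := #|cls C i a| in T h15 h16 *.
have H : 10 * (7 * m - 48) <= \sum_(j | j != i) Q (cls C i a) j.
  apply: sum_neq_lb => j _; have := Q_lb7 (cls C i a) j; lia.
have : m = 15 \/ m = 16 by lia.
case=> E; rewrite E in T H; lia.
Qed.

Lemma four_eq (a b c d : nat) : a+b+c+d = 16 -> a*a+b*b+c*c+d*d = 64 -> a = 4 /\ b = 4 /\ c = 4 /\ d = 4.
Proof.
move=> h1 h2. have ha := sq7 a; have hb := sq7 b; have hc := sq7 c; have hd := sq7 d.
have ea : a*a+12 = 7*a by lia. have eb : b*b+12 = 7*b by lia.
have ec : c*c+12 = 7*c by lia. have ed : d*d+12 = 7*d by lia.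
move/sq7_eq: ea; move/sq7_eq: eb; move/sq7_eq: ec; move/sq7_eq: ed. lia.
Qed.

Lemma sixteen (C : {set W}) i a j b : min_dist_ge 8 C -> #|cls C i a| = 16 -> j != i ->
  #|cls (cls C i a) j b| = 4.
Proof.
move=> hC h16 hji.
have T := tot_eq C (cls C i a) hC (cls_sub C i a).
rewrite sum_agr2 (sumQ_split _ i) Q_self h16 in T.
rewrite (sum_neq i _ 64) in T; last first.
  move=> k _; have := Q_lb7 (cls C i a) k; rewrite h16; lia.
have := term_le i j (fun k => Q (cls C i a) k - 64) hji.
have := Q_lb7 (cls C i a) j; rewrite h16 => Hl Ht.
have EQ : Q (cls C i a) j = 64 by lia.
move: EQ; rewrite /Q sum4 => EQ.
have S := sum_cls (cls C i a) j; rewrite sum4 h16 in S.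
have [e0 [e1 [e2 e3]]] := four_eq _ _ _ _ S EQ.
by case: (ord4_cases b) => [->|[->|[->|->]]].
Qed.

Lemma key (C : {set W}) i a x : min_dist_ge 8 C -> #|cls C i a| = 16 -> x \in C -> x i != a ->
  [exists y in cls C i a, (0 < agr x y) && (agr x y <= 2)].
Proof.
move=> hC h16 xC xia.
have S : \sum_(y in cls C i a) agr x y = 40.
  rewrite sum_agr (bigD1 i) //= cls_other // cards0 add0n.
  rewrite (eq_bigr (fun _ => 4)); last by move=> j hj; exact: sixteen.
  by rewrite sum_nat_const card_neq.
case: existsP => // H.
have : 3 %| \sum_(y in cls C i a) agr x y.
  apply: dvdn_sum => y yT; have Hy : ~~ ((0 < agr x y) && (agr x y <= 2)).
    by apply/negP => h; apply: H; exists y; rewrite yT.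
  have ny : x != y.
    apply/eqP => e; move: yT; rewrite inE -e => /andP [_ /eqP]; move: xia => /eqP //.
  have := agr_le3 C x y hC xC (subsetP (cls_sub C i a) y yT) ny.
  move: Hy; case: (agr x y) => [|[|[|[|k]]]] //.
by rewrite S.
Qed.


Lemma pat_ge13 (f : 'I_4 -> nat) b : \sum_(c < 4) f c = 61 -> (forall c, f c <= 16) -> 13 <= f b.
Proof.
rewrite sum4 => S h; have := h (inord 0); have := h (inord 1); have := h (inord 2); have := h (inord 3).
by case: (ord4_cases b) => [->|[->|[->|->]]]; lia.
Qed.

Lemma pat_16 (f : 'I_4 -> nat) : \sum_(c < 4) f c = 61 -> (forall c, f c <= 16) -> exists b, f b = 16.
Proof.
rewrite sum4 => S h; have := h (inord 0); have := h (inord 1); have := h (inord 2); have := h (inord 3).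
move=> h3 h2 h1 h0.
case: (f (inord 0) =P 16) => [e|n0]; first by exists (inord 0).
case: (f (inord 1) =P 16) => [e|n1]; first by exists (inord 1).
case: (f (inord 2) =P 16) => [e|n2]; first by exists (inord 2).
exists (inord 3); lia.
Qed.

Lemma pat_uniq (f : 'I_4 -> nat) b c : \sum_(d < 4) f d = 61 -> (forall d, f d <= 16) ->
  f b <= 14 -> c != b -> 15 <= f c.
Proof.
rewrite sum4 => S h; have := h (inord 0); have := h (inord 1); have := h (inord 2); have := h (inord 3).
by case: (ord4_cases b) => [->|[->|[->|->]]]; case: (ord4_cases c) => [->|[->|[->|->]]];
  rewrite ?eqxx //; lia.
Qed.

Lemma pat_13 (f : 'I_4 -> nat) b c : \sum_(d < 4) f d = 61 -> (forall d, f d <= 16) ->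
  f b = 13 -> c != b -> f c = 16.
Proof.
rewrite sum4 => S h; have := h (inord 0); have := h (inord 1); have := h (inord 2); have := h (inord 3).
by case: (ord4_cases b) => [->|[->|[->|->]]]; case: (ord4_cases c) => [->|[->|[->|->]]];
  rewrite ?eqxx //; lia.
Qed.

Lemma card_setP (C : {set W}) (P : pred W) : #|[set x in C | P x]| = \sum_(x in C) P x.
Proof.
rewrite -sum1_card (big_mkcond (fun y => y \in [set x in C | P x])) /= (big_mkcond (fun y => y \in C)).
by apply: eq_bigr => y _; rewrite inE; case: (y \in C); case: (P y).
Qed.

Lemma sum_part (S : {set W}) (l : 'I_11) (F : 'I_4 -> W -> nat) :
  \sum_(x in S) F (x l) x = \sum_(b < 4) \sum_(x in cls S l b) F b x.
Proof.
rewrite (partition_big (fun x : W => x l) predT) //=; apply: eq_bigr => b _.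
rewrite [RHS]big_mkcond [LHS]big_mkcond; apply: eq_bigr => x _; rewrite inE.
by case: (x \in S) => //=; case: (x l =P b) => [->|].
Qed.

Definition partner (C : {set W}) x := [exists y in C, (0 < agr x y) && (agr x y <= 2)].

Lemma unpartnered_unique (C : {set W}) x x' : min_dist_ge 8 C -> #|C| = 61 ->
  x \in C -> x' \in C -> ~~ partner C x -> ~~ partner C x' -> x = x'.
Proof.
move=> hC hM xC xC' px px'; apply/ffunP => l.
have [b hb] := pat_16 (fun b => #|cls C l b|) (etrans (sum_cls C l) hM) (fun c => class_le16 C l c hC).
have E : forall z, z \in C -> ~~ partner C z -> z l = b.
  move=> z zC pz; apply/eqP; apply: contraNT pz => nz.
  have /existsP [y /andP [yT hy]] := key C l b z hC hb zC nz.
  apply/existsP; exists y; rewrite hy andbT; exact: (subsetP (cls_sub C l b)).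
by rewrite (E x xC px) (E x' xC' px').
Qed.

Lemma partnered_ge (C : {set W}) : min_dist_ge 8 C -> #|C| = 61 ->
  60 <= \sum_(x in C) partner C x.
Proof.
move=> hC hM.
have H1 : #|[set x in C | ~~ partner C x]| <= 1.
  apply/card_le1_eqP => x y; rewrite !inE => /andP [xC px] /andP [yC py].
  exact: unpartnered_unique C y x hC hM yC xC py px.
have H2 : \sum_(x in C) partner C x + \sum_(x in C) ~~ partner C x = 61.
  by rewrite -big_split /= -hM -sum1_card; apply: eq_bigr => x _; case: (partner C x).
rewrite card_setP in H1; lia.
Qed.

Definition nt (C : {set W}) l b := #|cls C l b| <= 14.
Definition inner (C : {set W}) l (x : W) := \sum_(y in cls C l (x l) | y != x) (3 - agr x y).

Lemma partner_contrib (C : {set W}) x : min_dist_ge 8 C -> x \in C -> partner C x ->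
  1 <= \sum_(l < 11) nt C l (x l) * inner C l x.
Proof.
move=> hC xC /existsP [y /andP [yC /andP [h0 h2]]].
have nyx : y != x by apply/eqP => e; move: h2; rewrite e agr_self.
case: (pickP (fun l => x l == y l)) => [l hl | h]; last first.
  by move: h0; rewrite /agr big1 // => l _; rewrite h.
have xU : x \in cls C l (x l) by rewrite inE xC eqxx.
have yU : y \in cls C l (x l) by rewrite inE yC eq_sym hl.
have hnt : nt C l (x l).
  rewrite /nt leqNgt; apply/negP => h15.
  have := tight C l (x l) x y hC h15 xU yU (ltac:(by rewrite eq_sym)); lia.
rewrite (bigD1 l) //= hnt mul1n; apply: leq_trans (leq_addr _ _).
rewrite /inner (bigD1 y) /= ?yU ?nyx //; apply: leq_trans (leq_addr _ _); lia.
Qed.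

Lemma total_eq (C : {set W}) :
  \sum_(x in C) \sum_(l < 11) nt C l (x l) * inner C l x =
  \sum_(l < 11) \sum_(b < 4) nt C l b * sl (cls C l b).
Proof.
rewrite exchange_big /=; apply: eq_bigr => l _.
rewrite (sum_part C l (fun b x => nt C l b * \sum_(y in cls C l b | y != x) (3 - agr x y))).
by apply: eq_bigr => b _; rewrite /sl big_distrr.
Qed.

Definition typeA (C : {set W}) j := [exists b, #|cls C j b| == 13].

Lemma cls_comm (C : {set W}) l b j c : cls (cls C l b) j c = cls (cls C j c) l b.
Proof. by apply/setP => y; rewrite !inE; case: (y \in C); case: (y l == b); case: (y j == c). Qed.

Lemma ineq4 (k k' : nat) : k < 4 -> k' < 4 -> k != k' -> (inord k : 'I_4) != inord k'.
Proof. by move=> hk hk' hn; rewrite -val_eqE /= !inordK. Qed.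

Lemma q49 (g : 'I_4 -> nat) b0 : (forall c, c != b0 -> g c = 4) -> \sum_(c < 4) g c = 13 ->
  \sum_(c < 4) g c * g c = 49.
Proof.
move=> hg; rewrite !sum4.
case: (ord4_cases b0) hg => [->|[->|[->|->]]] hg.
- rewrite (hg (inord 1)) ?(hg (inord 2)) ?(hg (inord 3)) ?ineq4 //; lia.
- rewrite (hg (inord 0)) ?(hg (inord 2)) ?(hg (inord 3)) ?ineq4 //; lia.
- rewrite (hg (inord 0)) ?(hg (inord 1)) ?(hg (inord 3)) ?ineq4 //; lia.
- rewrite (hg (inord 0)) ?(hg (inord 1)) ?(hg (inord 2)) ?ineq4 //; lia.
Qed.

Lemma QA (C : {set W}) l b j : min_dist_ge 8 C -> #|C| = 61 -> #|cls C l b| = 13 -> j != l ->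
  typeA C j -> Q (cls C l b) j = 49.
Proof.
move=> hC hM h13 hjl /existsP [b0 /eqP hb0].
apply: (q49 (fun c => #|cls (cls C l b) j c|) b0); last by rewrite sum_cls.
move=> c hc; rewrite cls_comm; apply: sixteen => //; last by rewrite eq_sym.
exact: (pat_13 (fun c => #|cls C j c|) b0 c (etrans (sum_cls C j) hM) (fun c => class_le16 C j c hC) hb0 hc).
Qed.

Lemma sl14 (C : {set W}) l b : min_dist_ge 8 C -> #|cls C l b| = 14 -> sl (cls C l b) <= 4.
Proof.
move=> hC h14; have T := tot_eq C (cls C l b) hC (cls_sub C l b).
rewrite sum_agr2 (sumQ_split _ l) Q_self h14 in T.
have H : 10 * 50 <= \sum_(j | j != l) Q (cls C l b) j.
  apply: sum_neq_lb => j _; have := Q_lb7 (cls C l b) j; rewrite h14; lia.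
lia.
Qed.

Lemma sl13 (C : {set W}) l b : min_dist_ge 8 C -> #|C| = 61 -> #|cls C l b| = 13 ->
  sl (cls C l b) + 6 * \sum_(j < 11 | j != l) typeA C j <= 12.
Proof.
move=> hC hM h13; have T := tot_eq C (cls C l b) hC (cls_sub C l b).
rewrite sum_agr2 (sumQ_split _ l) Q_self h13 in T.
have H : \sum_(j | j != l) (43 + 6 * typeA C j) <= \sum_(j | j != l) Q (cls C l b) j.
  apply: leq_sum => j hj; case hA: (typeA C j).
    by rewrite (QA C l b j hC hM h13 hj hA).
  have := Q_lb7 (cls C l b) j; rewrite h13; lia.
have E : \sum_(j | j != l) (43 + 6 * typeA C j) = 430 + 6 * \sum_(j < 11 | j != l) typeA C j.
  by rewrite big_split /= sum_nat_const card_neq -big_distrr.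
lia.
Qed.

Lemma SL_bound (C : {set W}) l : min_dist_ge 8 C -> #|C| = 61 ->
  \sum_(b < 4) nt C l b * sl (cls C l b) + 6 * (\sum_(j < 11) typeA C j) * typeA C l
  <= 18 * typeA C l + 4 * ~~ typeA C l.
Proof.
move=> hC hM.
have hs := etrans (sum_cls C l) hM.
have hle := fun c => class_le16 C l c hC.
case hA: (typeA C l) => /=.
  move/existsP: (hA) => [b0 /eqP h13].
  rewrite (bigD1 b0) //= big1 ?addn0; last first.
    move=> c hc; rewrite /nt (pat_13 (fun c => #|cls C l c|) b0 c hs hle h13 hc) //.
  have E : \sum_(j < 11) typeA C j = 1 + \sum_(j < 11 | j != l) typeA C j by rewrite (bigD1 l) // hA.
  rewrite /nt h13 /= mul1n E.
  have := sl13 C l b0 hC hM h13; lia.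
case: (pickP (fun b => nt C l b)) => [b1 h1 | h]; last first.
  rewrite big1; first by rewrite !muln0.
  by move=> b _; rewrite h.
rewrite (bigD1 b1) //= big1 ?addn0; last first.
  move=> c hc; rewrite /nt leqNgt.
  by have := pat_uniq (fun c => #|cls C l c|) b1 c hs hle h1 hc => /= ->.
rewrite h1 mul1n.
have h14 : #|cls C l b1| = 14.
  have := pat_ge13 (fun c => #|cls C l c|) b1 hs hle; move: h1; rewrite /nt /= => h1 h13.
  case: (#|cls C l b1| =P 13) => [e|ne]; last first. move: h1 h13 ne; set k := #|cls C l b1|; move=> h1 h13 ne. clearbody k; lia.
  by move: hA; rewrite /typeA => /existsP; case; exists b1; rewrite e.
have := sl14 C l b1 hC h14; lia.
Qed.

Lemma main61 (C : {set W}) : min_dist_ge 8 C -> #|C| = 61 -> False.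
Proof.
move=> hC hM.
have P := partnered_ge C hC hM.
have H1 : \sum_(x in C) partner C x <= \sum_(x in C) \sum_(l < 11) nt C l (x l) * inner C l x.
  apply: leq_sum => x xC; case hp: (partner C x) => //.
  exact: partner_contrib C x hC xC hp.
rewrite total_eq in H1.
have H2 : 
  \sum_(l < 11) (\sum_(b < 4) nt C l b * sl (cls C l b) + 6 * (\sum_(j < 11) typeA C j) * typeA C l)
  <= \sum_(l < 11) (18 * typeA C l + 4 * ~~ typeA C l).
  by apply: leq_sum => l _; exact: SL_bound.
have E1 : \sum_(l < 11) (18 * typeA C l + 4 * ~~ typeA C l)
   = 18 * (\sum_(l < 11) typeA C l) + 4 * (\sum_(l < 11) ~~ typeA C l).
  by rewrite big_split -!big_distrr.
have E2 : \sum_(l < 11) (\sum_(b < 4) nt C l b * sl (cls C l b) + 6 * (\sum_(j < 11) typeA C j) * typeA C l)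
   = \sum_(l < 11) \sum_(b < 4) nt C l b * sl (cls C l b) + 6 * (\sum_(j < 11) typeA C j) * (\sum_(l < 11) typeA C l).
  by rewrite big_split -!big_distrr.
have H3 : \sum_(l < 11) typeA C l + \sum_(l < 11) ~~ typeA C l = 11.
  rewrite -big_split (eq_bigr (fun _ => 1)) ?sum1_card ?card_ord // => l _.
  by case: (typeA C l).
rewrite E1 E2 in H2.
move: H1 H2 H3.
set a := \sum_(l < 11) typeA C l.
set b := \sum_(l < 11) ~~ typeA C l.
set T := \sum_(l < 11) \sum_(b < 4) nt C l b * sl (cls C l b).
clearbody a b T => H1 H2 H3.
have : a <= 1 \/ 2 <= a by lia.
case=> ha; nia.
Qed.

Lemma min_dist_sub (C C' : {set W}) : min_dist_ge 8 C -> C' \subset C -> min_dist_ge 8 C'.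
Proof.
move=> /forallP hC sub; apply/forallP => u; apply/implyP => uC'.
apply/forallP => v; apply/implyP => vC'.
have := hC u; rewrite (subsetP sub u uC') /= => /forallP /(_ v).
by rewrite (subsetP sub v vC').
Qed.

Theorem proposition5p5 : A 4 11 8 <= 60.
Proof.
apply/bigmax_leqP => C hC; rewrite leqNgt; apply/negP => h61.
pose C' := [set x in take 61 (enum C)].
have sub : C' \subset C by apply/subsetP => x; rewrite inE => /mem_take; rewrite mem_enum.
have card61 : #|C'| = 61.
  rewrite cardsE; have /card_uniqP -> := take_uniq 61 (enum_uniq (mem C)).
  rewrite size_take -cardE; case: ifP => // /negbT; rewrite -leqNgt => h.
  by apply/eqP; rewrite eqn_leq h h61.
exact: main61 C' (min_dist_sub C C' hC sub) card61.
Qed.
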